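(* Let $L$ be an infinite set and let $Q$ be either the edgeless cube $Q_L$ or the edged cube $\bar Q_L$. Let $\vec\sigma,\vec\tau$ be universally convergent basic sequences. Then $\vec\sigma\sim\vec\tau$ if and only if $\vec\sigma\,\mathrm{id}=\vec\tau\,\mathrm{id}$, where $\mathrm{id}$ is the identity labelling. Moreover, if either holds, then $\vec\sigma f=\vec\tau f$ for every labelling $f$.
   Context: Let $L$ be an infinite set, $-L=\{-r:r\in L\}$ a disjoint copy of $L$, and $0$ a new element; $L^\dagger=-L\cup\{0\}\cup L$ with $-(-r)=r$, $-0=0$. Adjoin $\pm\infty$ with $-(+\infty)=-\infty$ and set $\bar L^\dagger=L^\dagger\cup\{\pm\infty\}$. Points of $U=(\bar L^\dagger)^3$ have coordinates $x,y,z$. The edgeless cube $Q_L$ is the set of points of $U$ with exactly one coordinate in $\{\pm\infty\}$ (cells). The edged cube $\bar Q_L$ is the set of cells $(p,i)$ with $p\in U$, $i\in\{x,y,z\}$, $p_i\in\{\pm\infty\}$ ($i$ marks the face). For $i\in\{x,y,z\}$, $\alpha\in\bar L^\dagger$, the quarter-turn twist $T_{i,\alpha}$ is the permutation of cells fixing every cell whose point $p$ has $p_i\ne\alpha$ and acting on the others by $T_{x,\alpha}(\alpha,y,z)=(\alpha,-z,y)$, $T_{y,\alpha}(x,\alpha,z)=(z,\alpha,-x)$, $T_{z,\alpha}(x,y,\alpha)=(-y,x,\alpha)$ (in $\bar Q_L$ the marked coordinate is carried along by the rotation). Basic twists are $T,T^2,T^3$ for quarter-turn twists $T$. A basic sequence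 is a sequence $\langle\sigma_\eta:\eta<\theta\rangle$ of basic twists of ordinal length $\theta$. A labelling is a map $f$ from cells to $X\cup\{\mathrm{NaC}\}$ for a set $X\not\ni\mathrm{NaC}$; it is legal if it never takes value NaC; a configuration is a labelling with $X$ the six colors red, white, green, orange, yellow, blue. A twist $\sigma$ acts by $(\sigma f)(c)=f(\sigma^{-1}c)$. Applying $\vec\sigma=\langle\sigma_\eta:\eta<\theta\rangle$ to $f_0$ produces $f_{\eta+1}=\sigma_\eta f_\eta$, and for limit $\lambda\le\theta$, $f_\lambda(c)$ is the eventually constant value of $f_\eta(c)$ ($\eta<\lambda$) if it exists and NaC otherwise; the terminal labelling $f_\theta$ is denoted $\vec\sigma f_0$. The identity labelling $\mathrm{id}$ labels each cell by itself; $\vec\sigma$ is universally convergent if $\vec\sigma\,\mathrm{id}$ is legal. $\vec\sigma\sim\vec\tau$ means $\vec\sigma f=\vec\tau f$ for every configuration $f$. *)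

(* Defs.v *)
From Stdlib Require Import Arith Lia List Relations ClassicalEpsilon.
Set Implicit Arguments.

Inductive Ldag (L : Type) : Type :=
| LNeg (r : L) | LZero | LPos (r : L) | LNInf | LPInf.
Arguments LZero {L}. Arguments LNInf {L}. Arguments LPInf {L}.

Definition ldneg {L} (a : Ldag L) : Ldag L :=
  match a with
  | LNeg r => LPos r | LPos r => LNeg r | LZero => LZero
  | LNInf => LPInf | LPInf => LNInf end.

Definition isInf {L} (a : Ldag L) : bool :=
  match a with LNInf | LPInf => true | _ => false end.

Lemma isInf_neg L (a : Ldag L) : isInf (ldneg a) = isInf a.
Proof. destruct a; reflexivity. Qed.

Record pt (L : Type) := Pt { px : Ldag L; py : Ldag L; pz : Ldag L }.

Inductive axis := AX | AY | AZ.

Definition coord {L} (p : pt L) (i : axis) : Ldag L :=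
  match i with AX => px p | AY => py p | AZ => pz p end.

Definition decP (P : Prop) : {P} + {~ P} := excluded_middle_informative P.

(* the rotation part of the quarter turn T_{i,alpha} on a point lying on the slice *)
Definition rot_pt {L} (i : axis) (p : pt L) : pt L :=
  match i with
  | AX => Pt (px p) (ldneg (pz p)) (py p)
  | AY => Pt (pz p) (py p) (ldneg (px p))
  | AZ => Pt (ldneg (py p)) (px p) (pz p)
  end.

Definition tw_pt {L} (i : axis) (alpha : Ldag L) (p : pt L) : pt L :=
  if decP (coord p i = alpha) then rot_pt i p else p.

(* where the rotation carries the coordinate direction j (marked face) *)
Definition carry (i j : axis) : axis :=
  match i, j with
  | AX, AY => AZ | AX, AZ => AY
  | AY, AX => AZ | AY, AZ => AX
  | AZ, AX => AY | AZ, AY => AX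
  | _, _ => j end.

Definition ninf {L} (p : pt L) : nat :=
  Nat.b2n (isInf (px p)) + Nat.b2n (isInf (py p)) + Nat.b2n (isInf (pz p)).

Definition edgeless_cell (L : Type) := { p : pt L | ninf p = 1 }.
Definition edged_cell (L : Type) := { q : pt L * axis | isInf (coord (fst q) (snd q)) = true }.

Lemma ninf_rot L i (p : pt L) : ninf (rot_pt i p) = ninf p.
Proof. destruct i; unfold ninf; simpl; rewrite ?isInf_neg; lia. Qed.

Lemma ninf_tw L i a (p : pt L) : ninf (tw_pt i a p) = ninf p.
Proof. unfold tw_pt; destruct (decP _); [apply ninf_rot | reflexivity]. Qed.

Definition edgeless_tw {L} (i : axis) (a : Ldag L) (c : edgeless_cell L) : edgeless_cell L :=
  exist _ (tw_pt i a (proj1_sig c)) (eq_trans (ninf_tw i a _) (proj2_sig c)).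

Definition edged_tw_raw {L} (i : axis) (a : Ldag L) (q : pt L * axis) : pt L * axis :=
  if decP (coord (fst q) i = a) then (rot_pt i (fst q), carry i (snd q)) else q.

Lemma edged_tw_ok L i (a : Ldag L) q :
  isInf (coord (fst q) (snd q)) = true -> isInf (coord (fst (edged_tw_raw i a q)) (snd (edged_tw_raw i a q))) = true.
Proof.
  unfold edged_tw_raw; destruct (decP _); [|auto].
  destruct q as [p j]; simpl; destruct i, j; simpl; rewrite ?isInf_neg; auto.
Qed.

Definition edged_tw {L} (i : axis) (a : Ldag L) (c : edged_cell L) : edged_cell L :=
  exist _ (edged_tw_raw i a (proj1_sig c)) (edged_tw_ok i a _ (proj2_sig c)).

Inductive cube_kind := Edgeless | Edged.

Definition cell (L : Type) (k : cube_kind) : Type :=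
  match k with Edgeless => edgeless_cell L | Edged => edged_cell L end.

Definition qtwist {L} (k : cube_kind) : axis -> Ldag L -> cell L k -> cell L k :=
  match k with Edgeless => @edgeless_tw L | Edged => @edged_tw L end.

Inductive power := P1 | P2 | P3.

Record btwist (L : Type) := BT { bt_axis : axis; bt_alpha : Ldag L; bt_pow : power }.

(* sigma^{-1} for sigma = T^n is T^(4-n) (T has order 4) *)
Definition inv_pow (n : power) : nat := match n with P1 => 3 | P2 => 2 | P3 => 1 end.

(* labellings with values in X u {NaC}; NaC is None *)
Definition labelling (C X : Type) := C -> option X.

(* (sigma f)(c) = f(sigma^{-1} c) *)
Definition bt_act {L} (k : cube_kind) {X} (b : btwist L) (f : labelling (cell L k) X)
  : labelling (cell L k) X :=
  fun c => f (Nat.iter (inv_pow (bt_pow b)) (qtwist k (bt_axis b) (bt_alpha b)) c).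

Record WellOrder := WO {
  wo_car :> Type;
  wo_lt : wo_car -> wo_car -> Prop;
  wo_wf : well_founded wo_lt;
  wo_trans : forall a b c, wo_lt a b -> wo_lt b c -> wo_lt a c;
  wo_total : forall a b, wo_lt a b \/ a = b \/ wo_lt b a }.

(* a basic sequence <sigma_eta : eta < theta>, theta given by the well-order bs_idx *)
Record bseq (L : Type) := BSeq { bs_idx : WellOrder; bs_tw : bs_idx -> btwist L }.

(* the ordinal theta+1 = {eta : eta <= theta}: None stands for theta itself *)
Definition ltO (I : WellOrder) (x y : option I) : Prop :=
  match x, y with
  | Some a, Some b => wo_lt I a b
  | Some _, None => True
  | _, _ => False end.

Arguments ltO {I} x y.

Lemma wf_ltO (I : WellOrder) : well_founded (@ltO I).
Proof.
  assert (HS : forall a : I, Acc (@ltO I) (Some a)).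
  { intro a; induction (wo_wf I a) as [a _ IH].
    constructor; intros [b|] Hb; simpl in Hb; [apply IH; exact Hb | contradiction]. }
  intros [a|]; [apply HS|]. constructor; intros [b|] Hb; [apply HS|simpl in Hb; contradiction].
Qed.

Section Run.
Variables (C X : Type) (I : WellOrder) (step : I -> labelling C X -> labelling C X)
  (f0 : labelling C X).

Definition run_step (x : option I) (rec : forall y, ltO y x -> labelling C X) : labelling C X :=
  match decP (exists b : I, ltO (Some b) x /\ forall z, ~ (ltO (Some b) z /\ ltO z x)) with
  | left H =>   (* successor x = b+1: f_{b+1} = sigma_b f_b *)
      let (b, Hb) := constructive_indefinite_description _ H in
      step b (rec (Some b) (proj1 Hb))
  | right _ =>
      match decP (exists y, ltO y x) with
      | left _ =>   (* limit: eventually constant value, else NaC *)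
          fun c =>
            match decP (exists v : option X, exists y (hy : ltO y x),
                          forall z (hz : ltO z x), (y = z \/ ltO y z) -> rec z hz c = v) with
            | left Hv => proj1_sig (constructive_indefinite_description _ Hv)
            | right _ => None
            end
      | right _ => f0   (* x = 0 *)
      end
  end.

Definition run : option I -> labelling C X :=
  Fix (@wf_ltO I) (fun _ => labelling C X) run_step.
End Run.

Definition seq_apply {L} (k : cube_kind) {X} (s : bseq L) (f0 : labelling (cell L k) X)
  : labelling (cell L k) X :=
  @run (cell L k) X (bs_idx s) (fun b => bt_act k (bs_tw s b)) f0 None.

Definition id_lab {L} (k : cube_kind) : labelling (cell L k) (cell L k) := fun c => Some c.

Definition legal {C X} (f : labelling C X) : Prop := forall c, f c <> None.

Definition univ_convergent {L} (k : cube_kind) (s : bseq L) : Prop :=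
  legal (seq_apply k s (id_lab k)).

Inductive color := Red | White | Green | Orange | Yellow | Blue.

Definition configuration (C : Type) := labelling C color.

Definition seq_equiv {L} (k : cube_kind) (s t : bseq L) : Prop :=
  forall f : configuration (cell L k), seq_apply k s f = seq_apply k t f.

Definition infinite (L : Type) : Prop := ~ exists l : list L, forall x, In x l.

(* Main.v *)
Require Import Defs.
From Stdlib Require Import FunctionalExtensionality ClassicalEpsilon.

Lemma run_eq C X (I : WellOrder) step (f0 : labelling C X) x :
  run I step f0 x = run_step I step f0 x (fun y _ => run I step f0 y).
Proof.
  unfold run. apply (Fix_eq (@wf_ltO I) (fun _ => labelling C X) (run_step I step f0)). intros x0 f g H.
  assert (f = g) by (extensionality y; extensionality p; apply H).
  subst; reflexivity.
Qed.

Lemma nat_run (C : Type) (I : WellOrder) (h : I -> C -> C) X (f : labelling C X) x :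
  forall c d, run I (fun b g c => g (h b c)) (fun c => Some c) x c = Some d ->
  run I (fun b g c => g (h b c)) f x c = f d.
Proof.
  induction (wf_ltO I x) as [x _ IH].
  intros c d Hid.
  rewrite run_eq in Hid |- *. unfold run_step in Hid |- *.
  destruct (decP _) as [H|H].
  - destruct (constructive_indefinite_description _ H) as [b Hb].
    apply IH; [exact (proj1 Hb)| exact Hid].
  - destruct (decP (exists y, ltO y x)) as [Hx|Hx].
    + destruct (decP _) as [Hv|Hv] in Hid; [|discriminate].
      destruct (constructive_indefinite_description _ Hv) as [v [y [hy Hy]]].
      simpl in Hid. subst v.
      destruct (decP _) as [Hw|Hw].
      * destruct (constructive_indefinite_description _ Hw) as [w [y' [hy' Hy']]].
        simpl.
        destruct y as [a|]; [|destruct hy].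
        destruct y' as [a'|]; [|destruct hy'].
        destruct (wo_total I a a') as [Hl|[He|Hl]].
        -- rewrite <- (Hy' (Some a') hy' (or_introl eq_refl)).
           apply IH; [exact hy'|]. apply (Hy (Some a') hy' (or_intror Hl)).
        -- subst a'. rewrite <- (Hy' (Some a) hy (or_introl eq_refl)).
           apply IH; [exact hy|]. apply (Hy (Some a) hy (or_introl eq_refl)).
        -- rewrite <- (Hy' (Some a) hy (or_intror Hl)).
           apply IH; [exact hy|]. apply (Hy (Some a) hy (or_introl eq_refl)).
      * exfalso; apply Hw. exists (f d), y, hy. intros z hz Hz.
        apply IH; [exact hz|]. apply (Hy z hz Hz).
    + injection Hid as <-. reflexivity.
Qed.

Lemma nat_seq L k (s : bseq L) X (f : labelling (cell L k) X) c d :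
  seq_apply k s (id_lab k) c = Some d -> seq_apply k s f c = f d.
Proof.
  intro H. unfold seq_apply in *.
  exact (@nat_run _ (bs_idx s)
    (fun b c => Nat.iter (inv_pow (bt_pow (bs_tw s b))) (qtwist k (bt_axis (bs_tw s b)) (bt_alpha (bs_tw s b))) c)
    _ f None c d H).
Qed.

Theorem lemma3p5 (L : Type) (HL : infinite L) (k : cube_kind) (s t : bseq L)
  (Hs : univ_convergent k s) (Ht : univ_convergent k t) :
  (seq_equiv k s t <-> seq_apply k s (id_lab k) = seq_apply k t (id_lab k)) /\
  ((seq_equiv k s t \/ seq_apply k s (id_lab k) = seq_apply k t (id_lab k)) ->
   forall (X : Type) (f : labelling (cell L k) X), seq_apply k s f = seq_apply k t f).
Proof.
  assert (P2 : seq_apply k s (id_lab k) = seq_apply k t (id_lab k) ->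
     forall (X : Type) (f : labelling (cell L k) X), seq_apply k s f = seq_apply k t f).
  { intros E X f. extensionality c.
    destruct (seq_apply k s (id_lab k) c) as [d|] eqn:Hd; [|exfalso; exact (Hs c Hd)].
    rewrite (nat_seq _ _ _ _ _ _ _ Hd). symmetry. apply nat_seq. rewrite <- E. exact Hd. }
  assert (P1 : seq_equiv k s t -> seq_apply k s (id_lab k) = seq_apply k t (id_lab k)).
  { intros Eq. extensionality c.
    destruct (seq_apply k s (id_lab k) c) as [d|] eqn:Hd; [|exfalso; exact (Hs c Hd)].
    destruct (seq_apply k t (id_lab k) c) as [d'|] eqn:Hd'; [|exfalso; exact (Ht c Hd')].
    destruct (decP (d = d')) as [->|Hne]; [reflexivity|exfalso].
    pose (f := fun e : cell L k => if decP (e = d) then Some Red else Some White).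
    assert (E := f_equal (fun g => g c) (Eq f)). simpl in E.
    rewrite (nat_seq _ _ _ _ _ _ _ Hd), (nat_seq _ _ _ _ _ _ _ Hd') in E.
    unfold f in E. destruct (decP (d = d)) as [_|n]; [|exact (n eq_refl)].
    destruct (decP (d' = d)) as [e|_]; [exact (Hne (eq_sym e))|discriminate]. }
  split; [split; [exact P1| intros E f; apply P2; exact E]|].
  intros [E|E]; apply P2; [apply P1|]; exact E.
Qed.
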